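(* If $p$ is an even positive integer, then $\mathrm{ex}(p+2,B_p)=p(p+2)/2$ and $\mathrm{ex}(p+3,B_p)=p(p+4)/2$. If $p$ is an odd positive integer, then $\mathrm{ex}(p+2,B_p)=(p+1)^2/2$ and $\mathrm{ex}(p+3,B_p)=(p+1)(p+3)/2$.
   Context: All graphs are finite and simple. The order of a graph is its number of vertices and its size is its number of edges. For a graph $H$ and a positive integer $n$, the Turán number $\mathrm{ex}(n,H)$ is the maximum size of a simple graph of order $n$ containing no subgraph isomorphic to $H$. The book $B_p$ with $p$ pages is the graph consisting of $p$ triangles sharing a common edge (so $B_p$ has $p+2$ vertices and $2p+1$ edges). *)

(* Defs.v *)
From mathcomp Require Import all_boot.
Set Implicit Arguments. Unset Strict Implicit. Unset Printing Implicit Defensive.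

Definition simple_graph (n : nat) (e : rel 'I_n) : Prop :=
  symmetric e /\ irreflexive e.

Definition gsize (n : nat) (e : rel 'I_n) : nat :=
  #|[set xy : 'I_n * 'I_n | (xy.1 < xy.2)%N && e xy.1 xy.2]|.

Definition contains_sub (h n : nat) (eH : rel 'I_h) (eG : rel 'I_n) : Prop :=
  exists f : 'I_h -> 'I_n, injective f /\ forall x y, eH x y -> eG (f x) (f y).

(* The book B_p on 'I_(p+2): spine vertices 0 and 1; pages 2..p+1, each adjacent
   to both 0 and 1; plus the spine edge {0,1}. *)
Definition book (p : nat) : rel 'I_(p + 2) :=
  fun x y =>
    let a := nat_of_ord x in let b := nat_of_ord y in
    [|| (a == 0) && (b == 1), (a == 1) && (b == 0),
        (a <= 1) && (1 < b) | (1 < a) && (b <= 1)].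

Arguments contains_sub : clear implicits.
Definition is_turan_number (n : nat) (h : nat) (eH : rel 'I_h) (m : nat) : Prop :=
  (exists eG : rel 'I_n, simple_graph eG /\ ~ contains_sub h n eH eG /\ gsize eG = m) /\
  (forall eG : rel 'I_n, simple_graph eG -> ~ contains_sub h n eH eG -> gsize eG <= m).
Arguments is_turan_number : clear implicits.
Arguments book : clear implicits.

(* Main.v *)
Require Import Defs.
From mathcomp Require Import all_boot zify.
Set Implicit Arguments. Unset Strict Implicit. Unset Printing Implicit Defensive.

Definition NN n (e : rel 'I_n) (x : 'I_n) : {set 'I_n} := [set z | (z != x) && ~~ e x z].

Lemma contains_imp p n (e : rel 'I_n) : simple_graph e ->
  contains_sub (p+2) n (book p) e ->
  exists x y, e x y /\ #|NN e x :|: NN e y| + (p + 2) <= n.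
Proof.
move=> [se ie] [f [fi fe]].
have o0 : 0 < p + 2 by rewrite addn2.
have o1 : 1 < p + 2 by rewrite addn2.
pose i0 := Ordinal o0; pose i1 := Ordinal o1.
exists (f i0), (f i1); split; first by apply: fe.
have k0 : forall j, j != i0 -> e (f i0) (f j).
  move=> j Hi; apply: fe; rewrite /book /=.
  have : nat_of_ord j != 0 by apply: contra Hi => /eqP H; apply/eqP/val_inj.
  move=> H; lia.
have k1 : forall j, j != i1 -> e (f i1) (f j).
  move=> j Hi; apply: fe; rewrite /book /=.
  have : nat_of_ord j != 1 by apply: contra Hi => /eqP H; apply/eqP/val_inj.
  move=> H; lia.
set I := [set f i | i in 'I_(p+2)].
have cI : #|I| = p + 2 by rewrite card_imset // card_ord.
have dis : I :&: (NN e (f i0) :|: NN e (f i1)) = set0.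
  apply/setP => z; rewrite !inE; apply/negbTE.
  apply/negP => /andP [/imsetP [i _ ->]].
  case: (eqVneq i i0) => [->|h0]; first by rewrite eqxx /= se (k0 i1) ?andbF.
  case: (eqVneq i i1) => [->|h1]; first by rewrite eqxx /= (k0 i1) ?andbF.
  by rewrite (k0 i h0) (k1 i h1) !andbF.
have := cardsUI I (NN e (f i0) :|: NN e (f i1)).
rewrite dis cards0 addn0 cI addnC => <-.
by apply: leq_trans (max_card _) _; rewrite card_ord.
Qed.

Lemma lt_help a b q : q <= b -> 1 < a -> a < q + 2 -> a - 2 < b.
Proof. lia. Qed.

Lemma sub2_inj a b : 1 < a -> 1 < b -> a - 2 = b - 2 -> a = b.
Proof. lia. Qed.

Lemma le1_cases a : a <= 1 -> (a == 0) || (a == 1).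
Proof. by case: a => [|[|a]]. Qed.

Definition bookf p n (x y : 'I_n) (s : seq 'I_n) (i : 'I_(p+2)) : 'I_n :=
  if nat_of_ord i == 0 then x else if nat_of_ord i == 1 then y
    else nth x s (nat_of_ord i - 2).

Lemma contains_of p n (e : rel 'I_n) : simple_graph e -> forall x y, e x y ->
  #|NN e x :|: NN e y| + (p + 2) <= n -> contains_sub (p+2) n (book p) e.
Proof.
move=> [se ie] x y exy hU.
set C := [set z | e x z && e y z].
have cov : [set: 'I_n] \subset C :|: ([set x; y] :|: (NN e x :|: NN e y)).
  apply/subsetP => z _; rewrite !inE.
  by case: (z == x); case: (z == y); case: (e x z); case: (e y z); rewrite ?orbT.
have hC : p <= #|C|.
  have := subset_leq_card cov; rewrite cardsT card_ord => h1.
  have h2 := cardsUI C ([set x; y] :|: (NN e x :|: NN e y)).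
  have h3 := cardsUI [set x; y] (NN e x :|: NN e y).
  have h4 : #|[set x; y]| <= 2 by rewrite cards2; case: (x != y).
  move: h1 h2 h3 h4 hU.
  move: #|C :|: _| #|C :&: _| #|[set x; y] :|: _| #|[set x; y] :&: _| #|[set x; y]| #|NN e x :|: NN e y| #|C|.
  move=> *; lia.
have xy : x != y by apply: contraTneq exy => ->; rewrite ie.
have Cx : forall z, z \in C -> (z != x) && (z != y).
  move=> z; rewrite inE => /andP [h1 h2].
  by apply/andP; split; [apply: contraTneq h1 => ->| apply: contraTneq h2 => ->]; rewrite ie.
have [s [us hs sC]] : exists s : seq (ordinal n), [/\ uniq s, p <= size s & {subset s <= C}].
  by exists (enum C); split; rewrite ?enum_uniq -?cardE // => z; rewrite mem_enum.
clear hU cov hC.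
pose f := bookf (p:=p) x y s.
have fin : forall i : 'I_(p+2), 1 < i -> f i \in C.
  move=> i hi; rewrite /f /bookf; have -> : (nat_of_ord i == 0) = false by lia.
  have -> : (nat_of_ord i == 1) = false by lia.
  apply: sC; apply: mem_nth; exact: lt_help hs hi (ltn_ord i).
exists f; split.
  move=> i j; case: (ltnP 1 i) => hi; case: (ltnP 1 j) => hj.
  - move=> h; apply: val_inj; move: h; rewrite /f /bookf.
    have -> : (nat_of_ord i == 0) = false by lia.
    have -> : (nat_of_ord i == 1) = false by lia.
    have -> : (nat_of_ord j == 0) = false by lia.
    have -> : (nat_of_ord j == 1) = false by lia.
    move/eqP; rewrite nth_uniq //; last first.
      exact: lt_help hs hj (ltn_ord j).
      exact: lt_help hs hi (ltn_ord i).
    move/eqP; exact: sub2_inj hi hj.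
  - move=> h; have := fin i hi; rewrite h => /Cx; rewrite /f /bookf.
    case: ifP => H0; first by rewrite eqxx.
    case: ifP => H1; first by rewrite eqxx andbF.
    by have := le1_cases hj; rewrite H0 H1.
  - move=> h; have := fin j hj; rewrite -h => /Cx; rewrite /f /bookf.
    case: ifP => H0; first by rewrite eqxx.
    case: ifP => H1; first by rewrite eqxx andbF.
    by have := le1_cases hi; rewrite H0 H1.
  - rewrite /f /bookf; have e10 : (1 == 0) = false by [].
    case/orP: (le1_cases hi) => /eqP i0; case/orP: (le1_cases hj) => /eqP j0;
      rewrite i0 j0 ?eqxx ?e10 ?eqxx => h;
      try (apply: val_inj; exact: (etrans i0 (esym j0))); by move: xy; rewrite h eqxx.
move=> i j; rewrite /book /= => hb.
have Hf0 : forall k : 'I_(p+2), nat_of_ord k = 0 -> f k = x by move=> k hk; rewrite /f /bookf hk.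
have Hf1 : forall k : 'I_(p+2), nat_of_ord k = 1 -> f k = y by move=> k hk; rewrite /f /bookf hk.
have HC : forall k : 'I_(p+2), 1 < k -> e x (f k) && e y (f k) by move=> k /fin; rewrite inE.
case/or4P: hb => /andP [h1 h2].
- by move/eqP: h1 => h1; move/eqP: h2 => h2; rewrite (Hf0 i h1) (Hf1 j h2).
- by move/eqP: h1 => h1; move/eqP: h2 => h2; rewrite (Hf1 i h1) (Hf0 j h2) se.
- have /andP [h3 h4] := HC j h2.
  case: (eqVneq (nat_of_ord i) 0) => i0; first by rewrite (Hf0 i i0).
  have i1 : nat_of_ord i = 1 by move: h1 i0; clear; lia.
  by rewrite (Hf1 i i1).
- have /andP [h3 h4] := HC i h1.
  case: (eqVneq (nat_of_ord j) 0) => j0; first by rewrite (Hf0 j j0) se.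
  have j1 : nat_of_ord j = 1 by move: h2 j0; clear; lia.
  by rewrite (Hf1 j j1) se.
Qed.

Lemma card_sumP (T : finType) (P : pred T) : #|P| = \sum_x P x.
Proof. by rewrite -sum1_card big_mkcond /=; apply: eq_bigr => x _; rewrite unfold_in; case: (P x). Qed.

Lemma card_sumS (T : finType) (A : {set T}) : #|A| = \sum_x (x \in A).
Proof. by rewrite -sum1_card big_mkcond /=; apply: eq_bigr => x _; case: (x \in A). Qed.

Lemma sum_const_ord n c : \sum_(x < n) c = n * c.
Proof. by rewrite sum_nat_const card_ord. Qed.

Lemma gsize_sum n (e : rel 'I_n) : simple_graph e ->
  2 * gsize e + \sum_x #|NN e x| = n * n.-1.
Proof.
move=> [se ie].
have g1 : gsize e = \sum_(x < n) \sum_(y < n) ((x < y) && e x y).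
  rewrite /gsize card_sumS pair_bigA /=; apply: eq_bigr => xy _; by rewrite inE.
have g2 : gsize e = \sum_(x < n) \sum_(y < n) ((y < x) && e x y).
  rewrite g1 exchange_big /=; apply: eq_bigr => x _; apply: eq_bigr => y _; by rewrite se.
have d : forall x, \sum_(y < n) (e x y : nat) + #|NN e x| = n.-1.
  move=> x; rewrite card_sumS -big_split /=.
  have -> : n.-1 = #|predC1 x| by rewrite cardC1 card_ord.
  rewrite card_sumP; apply: eq_bigr => y _; rewrite !inE /=.
  case: (eqVneq y x) => [->|yx]; first by rewrite ie.
  by case: (e x y).
rewrite mul2n -addnn {1}g1 g2 -!big_split /= -(sum_const_ord n n.-1).
apply: eq_bigr => x _; rewrite -(d x) -big_split /=; congr (_ + _).
apply: eq_bigr => y _.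
case: (ltngtP x y) => h; rewrite ?andbF ?andbT ?addn0 ?add0n //.
have xy : x = y by apply: val_inj.
by rewrite xy ie.
Qed.

Lemma sum_pred1 n (a : 'I_n) : \sum_(x < n) (x == a : nat) = 1.
Proof. by rewrite -(card1 a) card_sumP. Qed.

Lemma sum_neq n (a : 'I_n) : \sum_(x < n) (x != a : nat) = n.-1.
Proof. have -> : n.-1 = #|predC1 a| by rewrite cardC1 card_ord. by rewrite card_sumP. Qed.

Lemma NN_sym n (e : rel 'I_n) : symmetric e -> forall u w, (w \in NN e u) = (u \in NN e w).
Proof. by move=> se u w; rewrite !inE se eq_sym. Qed.

Lemma NN0 n (e : rel 'I_n) x y : #|NN e x| = 0 -> y != x -> e x y.
Proof.
move=> h yx; have : y \notin NN e x by rewrite (card0_eq h) inE.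
by rewrite inE yx /=; case: (e x y).
Qed.

Lemma cardU_le n (A B : {set 'I_n}) : #|A :|: B| <= #|A| + #|B|.
Proof. by rewrite -cardsUI leq_addr. Qed.

Lemma ub_all n (e : rel 'I_n) k : (forall y, k <= #|NN e y|) ->
  k * n <= \sum_x #|NN e x|.
Proof. move=> h; rewrite mulnC -sum_const_ord; exact: leq_sum. Qed.

Definition bfree p n (e : rel 'I_n) := forall x y, e x y -> n < #|NN e x :|: NN e y| + (p + 2).

Lemma ub_gen n (e : rel 'I_n) x0 k : (forall y, y != x0 -> k <= #|NN e y|) ->
  k * n.-1 <= \sum_x #|NN e x|.
Proof.
move=> h; rewrite -(sum_neq x0) big_distrr /=; apply: leq_sum => y _.
by case: (eqVneq y x0) => [_|/h]; rewrite ?muln0 ?muln1.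
Qed.

Lemma ub1 p (e : rel 'I_(p + 2)) : simple_graph e -> bfree p e ->
  p + 1 <= \sum_x #|NN e x|.
Proof.
move=> [se ie] fr.
case: (boolP [exists x, #|NN e x| == 0]) => [/existsP [x0 /eqP h0]|].
  apply: leq_trans (@ub_gen _ e x0 1 _); first by rewrite mul1n addn2 addn1.
  move=> y yx.
  have := fr _ _ (NN0 h0 yx); have := cardU_le (NN e x0) (NN e y); rewrite h0.
  move: #|_ :|: _| #|NN e y| => a b; lia.
rewrite negb_exists => /forallP h.
apply: leq_trans (_ : \sum_(x < p + 2) 1 <= _); first by rewrite sum_const_ord; lia.
by apply: leq_sum => x _; have := h x; rewrite lt0n.
Qed.

Lemma ub2a p (e : rel 'I_(p + 3)) : simple_graph e -> bfree p e ->
  (exists x0, #|NN e x0| = 0) -> 2 * (p + 2) <= \sum_x #|NN e x|.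
Proof.
move=> [se ie] fr [x0 h0].
apply: leq_trans (@ub_gen _ e x0 2 _); first by rewrite addn3 addn2.
move=> y yx.
have := fr _ _ (NN0 h0 yx); have := cardU_le (NN e x0) (NN e y); rewrite h0.
move: #|_ :|: _| #|NN e y| => a b; lia.
Qed.

Lemma ub2b p (e : rel 'I_(p + 3)) : simple_graph e -> bfree p e -> ~~ odd p ->
  (forall x, 0 < #|NN e x|) -> p + 5 <= \sum_x #|NN e x|.
Proof.
move=> [se ie] fr ev h1.
have gs := gsize_sum (conj se ie).
have ge : p + 3 <= \sum_x #|NN e x|.
  by have := @ub_all _ e 1 h1; rewrite mul1n.
have pe : p %% 2 = 0 by rewrite modn2; case: (odd p) ev.
rewrite leqNgt; apply/negP => hlt.
case: (boolP [exists w, 1 < #|NN e w|]); last first.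
  rewrite negb_exists => /forallP hw.
  have : \sum_x #|NN e x| <= \sum_(x < p + 3) 1.
    by apply: leq_sum => x _; have := hw x; rewrite ltnNge negbK.
  rewrite sum_const_ord => hle.
  move: gs ge hle; move: (\sum_x #|NN e x|) (gsize e) => S g.
  have -> : (p + 3) * (p + 3).-1 = 2 * ((p + 3) * (p %/ 2 + 1)) by rewrite addn3 /=; lia.
  lia.
move=> /existsP [w hw].
have hx : forall x, x != w -> #|NN e x| <= 1.
  move=> x xw; rewrite leqNgt; apply/negP => hx.
  have : \sum_(y < p + 3) (1 + (y == w) + (y == x)) <= \sum_x #|NN e x|.
    apply: leq_sum => y _.
    case: (eqVneq y w) => [->|yw]; first by rewrite eq_sym (negbTE xw) addn0 addn1.
    case: (eqVneq y x) => [->|yx]; first by rewrite addn0 addn1.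
    by rewrite !addn0 h1.
  rewrite !big_split /= sum_const_ord !sum_pred1.
  move: hlt; move: (\sum_x #|NN e x|) => S; lia.
have [u [v [uw vw uv]]] := card_gt1P hw.
have uw' : u != w by move: uw; rewrite inE => /andP [].
have vw' : v != w by move: vw; rewrite inE => /andP [].
have wu : w \in NN e u by rewrite NN_sym.
have wv : w \in NN e v by rewrite NN_sym.
have hu := hx u uw'; have hv := hx v vw'.
have euv : e u v.
  apply/negPn/negP => ne.
  have : 1 < #|NN e u|.
    apply/card_gt1P; exists w, v; split => //; first by rewrite inE eq_sym uv.
    by rewrite eq_sym.
  by rewrite ltnNge hu.
have := fr _ _ euv.
have := cardsUI (NN e u) (NN e v).
have : 0 < #|NN e u :&: NN e v| by apply/card_gt0P; exists w; rewrite inE wu wv.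
move: hu hv; move: #|NN e u :|: _| #|NN e u :&: _| #|NN e u| #|NN e v| => a b c d.
lia.
Qed.

Definition mp n (g : nat -> nat) : rel 'I_n := fun x y => g x != g y.

Lemma mp_simple n g : simple_graph (@mp n g).
Proof. by split; [move=> x y; rewrite /mp eq_sym | move=> x; rewrite /mp eqxx]. Qed.

Lemma NN_mp_le n g (x : 'I_n) (s : seq nat) :
  (forall z : 'I_n, nat_of_ord z != nat_of_ord x -> g (nat_of_ord z) = g (nat_of_ord x) -> (nat_of_ord z) \in s) ->
  #|NN (mp g) x| <= size s.
Proof.
move=> h; rewrite cardE -(size_map val); apply: uniq_leq_size.
  by rewrite map_inj_uniq ?enum_uniq //; apply: val_inj.
move=> a /mapP [z]; rewrite mem_enum inE /mp => /andP [zx].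
rewrite negbK => /eqP gz ->; apply: h => //.
Qed.

Definition partner n (g : nat -> nat) (x : 'I_n) := exists z : 'I_n, nat_of_ord z != nat_of_ord x /\ g (nat_of_ord z) = g (nat_of_ord x).

Lemma partner_NN n (g : nat -> nat) (x : 'I_n) : partner g x -> exists z, z \in NN (mp g) x.
Proof.
move=> [z [zx gz]]; exists z; rewrite inE /mp gz eqxx andbT.
by apply: contra zx => /eqP ->.
Qed.

Lemma ex_ord n q : q < n -> exists z : 'I_n, nat_of_ord z = q.
Proof. by move=> h; exists (Ordinal h). Qed.

Lemma mp_free1 p (g : nat -> nat) : (forall x y : 'I_(p+2), g (nat_of_ord x) != g (nat_of_ord y) -> partner g x \/ partner g y) ->
  bfree p (@mp (p+2) g).
Proof.
move=> h x y /h [/partner_NN [z hz] | /partner_NN [z hz]].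
  have : 0 < #|NN (mp g) x :|: NN (mp g) y| by apply/card_gt0P; exists z; rewrite inE hz.
  by move: #|_| => a; lia.
have : 0 < #|NN (mp g) x :|: NN (mp g) y| by apply/card_gt0P; exists z; rewrite inE hz orbT.
by move: #|_| => a; lia.
Qed.

Lemma mp_free2 p (g : nat -> nat) : (forall x : 'I_(p+3), partner g x) -> bfree p (@mp (p+3) g).
Proof.
move=> h x y gxy.
have [z1 [z1x g1]] := h x; have [z2 [z2y g2]] := h y.
have : 1 < #|NN (mp g) x :|: NN (mp g) y|.
  apply/card_gt1P; exists z1, z2; split.
  - by rewrite !inE /mp g1 eqxx andbT; apply/orP; left; apply: contra z1x => /eqP ->.
  - by rewrite !inE /mp g2 eqxx andbT; apply/orP; right; apply: contra z2y => /eqP ->.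
  - by apply: contra gxy => /eqP e12; rewrite /mp -g1 -g2 e12 eqxx.
by move: #|_| => a; lia.
Qed.

Lemma mp_lb n (g : nat -> nat) B : \sum_x #|NN (@mp n g) x| <= B -> n * n.-1 <= 2 * gsize (@mp n g) + B.
Proof.
move=> h; have := gsize_sum (@mp_simple n g).
move: (\sum_x _) h => S h <-; lia.
Qed.

Definition gB (a : nat) := a %/ 2.
Definition gA (a : nat) := (a + 1) %/ 2.
Definition gC (a : nat) := (maxn a 2 + 1) %/ 2.

Lemma partnerB n (x : 'I_n) : n %% 2 = 0 -> partner gB x.
Proof.
move=> hn; have hx := ltn_ord x.
rewrite /partner /gB.
case: (eqVneq ((nat_of_ord x) %% 2) 0) => h.
  have [z hz] := @ex_ord n ((nat_of_ord x) + 1) ltac:(lia).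
  by exists z; rewrite hz; split; [apply/eqP; lia | lia].
have [z hz] := @ex_ord n ((nat_of_ord x) - 1) ltac:(lia).
by exists z; rewrite hz; split; [apply/eqP; lia | lia].
Qed.

Lemma NNB n (x : 'I_n) : #|NN (@mp n gB) x| <= 1.
Proof.
case: (eqVneq (nat_of_ord x %% 2) 0) => h.
  apply: (@leq_trans (size [:: nat_of_ord x + 1])) => //.
  apply: NN_mp_le => z; rewrite /gB inE => /eqP h1 h2; apply/eqP; lia.
apply: (@leq_trans (size [:: nat_of_ord x - 1])) => //.
apply: NN_mp_le => z; rewrite /gB inE => /eqP h1 h2; apply/eqP; lia.
Qed.

Lemma sumB n : \sum_x #|NN (@mp n gB) x| <= n.
Proof.
apply: leq_trans (_ : \sum_(x < n) 1 <= _); last by rewrite sum_const_ord muln1.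
by apply: leq_sum => x _; apply: NNB.
Qed.

Lemma partnerA n (x : 'I_n) : n %% 2 = 1 -> nat_of_ord x != 0 -> partner gA x.
Proof.
move=> hn; have hx := ltn_ord x.
rewrite /partner /gA => /eqP a0.
case: (eqVneq ((nat_of_ord x) %% 2) 1) => h.
  have [z hz] := @ex_ord n ((nat_of_ord x) + 1) ltac:(lia).
  by exists z; rewrite hz; split; [apply/eqP; lia | lia].
have [z hz] := @ex_ord n ((nat_of_ord x) - 1) ltac:(lia).
by exists z; rewrite hz; split; [apply/eqP; lia | lia].
Qed.

Lemma NNA n (x : 'I_n) : #|NN (@mp n gA) x| <= (nat_of_ord x != 0).
Proof.
case: (eqVneq (nat_of_ord x) 0) => h0 /=.
  apply: (@leq_trans (size ([::] : seq nat))) => //.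
  apply: NN_mp_le => z; rewrite /gA => /eqP h1 h2; exfalso; lia.
case: (eqVneq (nat_of_ord x %% 2) 1) => h.
  apply: (@leq_trans (size [:: nat_of_ord x + 1])) => //.
  apply: NN_mp_le => z; rewrite /gA inE => /eqP h1 h2; apply/eqP; lia.
apply: (@leq_trans (size [:: nat_of_ord x - 1])) => //.
apply: NN_mp_le => z; rewrite /gA inE => /eqP h1 h2; apply/eqP; lia.
Qed.

Lemma sumA n (a0 : 'I_n) : nat_of_ord a0 = 0 -> \sum_x #|NN (@mp n gA) x| <= n.-1.
Proof.
move=> h0; rewrite -(sum_neq a0); apply: leq_sum => x _.
apply: leq_trans (NNA x) _.
case: (eqVneq x a0) => [->|]; first by rewrite h0.
by move=> xa; case: (nat_of_ord x != 0).
Qed.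

Lemma partnerC n (x : 'I_n) : n %% 2 = 1 -> 4 < n -> partner gC x.
Proof.
move=> hn n4; have hx := ltn_ord x.
rewrite /partner /gC.
case: (leqP (nat_of_ord x) 2) => h2.
  have [z hz] := @ex_ord n (((nat_of_ord x) + 1) %% 3) ltac:(lia).
  by exists z; rewrite hz; split; [apply/eqP; lia | lia].
case: (eqVneq ((nat_of_ord x) %% 2) 1) => h.
  have [z hz] := @ex_ord n ((nat_of_ord x) + 1) ltac:(lia).
  by exists z; rewrite hz; split; [apply/eqP; lia | lia].
have [z hz] := @ex_ord n ((nat_of_ord x) - 1) ltac:(lia).
by exists z; rewrite hz; split; [apply/eqP; lia | lia].
Qed.

Lemma NNC n (x : 'I_n) : #|NN (@mp n gC) x| <= 1 + (nat_of_ord x <= 2).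
Proof.
case: (leqP (nat_of_ord x) 2) => h2 /=.
  apply: (@leq_trans (size [:: (nat_of_ord x + 1) %% 3; (nat_of_ord x + 2) %% 3])) => //.
  apply: NN_mp_le => z; rewrite /gC !inE => /eqP h1 h2'; apply/orP.
  case: (eqVneq (nat_of_ord z) ((nat_of_ord x + 1) %% 3)) => h3; first by left; apply/eqP.
  right; apply/eqP; lia.
case: (eqVneq (nat_of_ord x %% 2) 1) => h.
  apply: (@leq_trans (size [:: nat_of_ord x + 1])) => //.
  apply: NN_mp_le => z; rewrite /gC inE => /eqP h1 h2'; apply/eqP; lia.
apply: (@leq_trans (size [:: nat_of_ord x - 1])) => //.
apply: NN_mp_le => z; rewrite /gC inE => /eqP h1 h2'; apply/eqP; lia.
Qed.

Lemma sumC n (a0 a1 a2 : 'I_n) : nat_of_ord a0 = 0 -> nat_of_ord a1 = 1 -> nat_of_ord a2 = 2 ->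
  \sum_x #|NN (@mp n gC) x| <= n + 3.
Proof.
move=> h0 h1 h2.
apply: leq_trans (_ : \sum_(x < n) (1 + (x == a0) + (x == a1) + (x == a2)) <= _).
  apply: leq_sum => x _; apply: leq_trans (NNC x) _.
  rewrite -!val_eqE /= h0 h1 h2.
  move: (nat_of_ord x) => a.
  by case: a => [|[|[|a]]].
by rewrite !big_split /= sum_const_ord !sum_pred1 muln1 -!addnA.
Qed.

Lemma turan_of n p X :
  (forall e : rel 'I_n, simple_graph e -> ~ contains_sub (p+2) n (book p) e -> gsize e * 2 <= X) ->
  (exists e : rel 'I_n, [/\ simple_graph e, ~ contains_sub (p+2) n (book p) e & X <= gsize e * 2 + 1]) ->
  is_turan_number n (p+2) (book p) (X %/ 2).
Proof.
move=> ub [e [se nc lb]]; split.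
  exists e; split=> //; split=> //; apply/eqP; rewrite eqn_leq leq_divRL ?ub //=.
  by rewrite -ltnS ltn_divLR // mulSn; move: (gsize e) lb => g; lia.
by move=> e' s' n'; rewrite leq_divRL //; exact: ub.
Qed.

Lemma free_of p n (e : rel 'I_n) : simple_graph e -> ~ contains_sub (p+2) n (book p) e -> bfree p e.
Proof.
move=> s nc x y exy; rewrite ltnNge; apply/negP => h; apply: nc; exact: (@contains_of p n e s x y exy h).
Qed.

Lemma nc_of_free p n (e : rel 'I_n) : simple_graph e -> bfree p e -> ~ contains_sub (p+2) n (book p) e.
Proof.
move=> s fr /(contains_imp s) [x [y [exy h]]]; have := fr x y exy; rewrite ltnNge h //.
Qed.

Lemma ub_n3 p (e : rel 'I_(p + 3)) : simple_graph e -> bfree p e -> 0 < p ->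
  p + 3 <= \sum_x #|NN e x| /\ (~~ odd p -> p + 5 <= \sum_x #|NN e x|).
Proof.
move=> s fr p0.
case: (boolP [exists x, #|NN e x| == 0]) => [/existsP [x0 /eqP h0]|].
  have := ub2a s fr (ex_intro _ x0 h0); move: (\sum_x _) => S; split; lia.
rewrite negb_exists => /forallP h.
have h' : forall x, 0 < #|NN e x| by move=> x; rewrite lt0n h.
split; last by move=> ev; exact: ub2b s fr ev h'.
by have := @ub_all _ e 1 h'; rewrite mul1n.
Qed.

Lemma part3 p : odd p -> is_turan_number (p + 2) (p + 2) (book p) ((p + 1) ^ 2 %/ 2).
Proof.
move=> op; have pm : p %% 2 = 1 by rewrite modn2 op.
apply: turan_of.
  move=> e s nc; have := ub1 s (free_of s nc); have := gsize_sum s.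
  move: (\sum_x _) (gsize e) => S g; nia.
exists (@mp (p+2) gA); split; first exact: mp_simple.
  apply: nc_of_free; first exact: mp_simple.
  apply: mp_free1 => x y gxy.
  case: (eqVneq (nat_of_ord x) 0) => hx0.
    right; apply: partnerA; first by lia.
    by apply: contra gxy => /eqP hy0; rewrite hx0 hy0.
  by left; apply: partnerA; lia.
have [a0 h0] := @ex_ord (p+2) 0 ltac:(lia).
have := mp_lb (sumA h0); move: (gsize _) => g; nia.
Qed.

Lemma part4 p : odd p -> is_turan_number (p + 3) (p + 2) (book p) ((p + 1) * (p + 3) %/ 2).
Proof.
move=> op; have pm : p %% 2 = 1 by rewrite modn2 op.
have p0 : 0 < p by case: p op pm.
apply: turan_of.
  move=> e s nc; have [h _] := ub_n3 s (free_of s nc) p0; have := gsize_sum s.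
  move: h; move: (\sum_x _) (gsize e) => S g; nia.
exists (@mp (p+3) gB); split; first exact: mp_simple.
  apply: nc_of_free; first exact: mp_simple.
  by apply: mp_free2 => x; apply: partnerB; lia.
have := mp_lb (@sumB (p + 3)); move: (gsize _) => g; nia.
Qed.

Lemma part1 p : ~~ odd p -> is_turan_number (p + 2) (p + 2) (book p) (p * (p + 2) %/ 2).
Proof.
move=> op; have pm : p %% 2 = 0 by rewrite modn2; case: (odd p) op.
have [k pk] : exists k, p = 2 * k by exists (p %/ 2); lia.
apply: turan_of.
  move=> e s nc; have := ub1 s (free_of s nc); have := gsize_sum s.
  move: (\sum_x _) (gsize e) => S g; clear e s nc; subst p; nia.
exists (@mp (p+2) gB); split; first exact: mp_simple.
  apply: nc_of_free; first exact: mp_simple.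
  by apply: mp_free1 => x y gxy; left; apply: partnerB; lia.
have := mp_lb (@sumB (p + 2)); move: (gsize _) => g; nia.
Qed.

Lemma part2 p : ~~ odd p -> 0 < p -> is_turan_number (p + 3) (p + 2) (book p) (p * (p + 4) %/ 2).
Proof.
move=> op p0; have pm : p %% 2 = 0 by rewrite modn2; case: (odd p) op.
have [k pk] : exists k, p = 2 * k by exists (p %/ 2); lia.
apply: turan_of.
  move=> e s nc; have [_ h] := ub_n3 s (free_of s nc) p0; have := gsize_sum s.
  move: (h op); move: (\sum_x _) (gsize e) => S g; clear e s nc h; subst p; nia.
exists (@mp (p+3) gC); split; first exact: mp_simple.
  apply: nc_of_free; first exact: mp_simple.
  by apply: mp_free2 => x; apply: partnerC; lia.
have [a0 h0] := @ex_ord (p+3) 0 ltac:(lia).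
have [a1 h1] := @ex_ord (p+3) 1 ltac:(lia).
have [a2 h2] := @ex_ord (p+3) 2 ltac:(lia).
have := mp_lb (sumC h0 h1 h2); move: (gsize _) => g; nia.
Qed.

Unset Implicit Arguments.
Theorem lemma8 (p : nat) (hp : 0 < p) :
  (~~ odd p ->
     is_turan_number (p + 2) (p + 2) (book p) (p * (p + 2) %/ 2) /\
     is_turan_number (p + 3) (p + 2) (book p) (p * (p + 4) %/ 2)) /\
  (odd p ->
     is_turan_number (p + 2) (p + 2) (book p) ((p + 1) ^ 2 %/ 2) /\
     is_turan_number (p + 3) (p + 2) (book p) ((p + 1) * (p + 3) %/ 2)).
Proof.
split=> op; split.
- exact: part1.
- exact: part2.
- exact: part3.
- exact: part4.
Qed.
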